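(* Let $\rho$ be a representation of $32_{65}$ over a set $U$. Then the graph on $U$ whose edges are the pairs $\{x,y\}$ with $(x,y)\in\rho(a)$ contains a clique of size $6$.
   Context: $32_{65}$ is the finite integral symmetric relation algebra with atoms $1'$, $a$, $b$, $c$, all symmetric, in which a diversity cycle $xyz$ (with $x,y,z\in\{a,b,c\}$) is mandatory (i.e. $x;y\ge z$) if it involves $a$ and forbidden (i.e. $x;y\cdot z=0$) otherwise. A representation over a set $U$ is an embedding $\rho$ into the full relation algebra $\langle\mathcal P(U\times U),\cup,{}^c,\circ,{}^{-1},\mathrm{Id}_U\rangle$. *)

(* Defs.v *)
From HB Require Import structures.
From mathcomp Require Import all_boot.
Set Implicit Arguments. Unset Strict Implicit. Unset Printing Implicit Defensive.

(** Atoms of the relation algebra 32_65: the identity 1' and the diversity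
    atoms a, b, c (all symmetric). *)
Inductive atom := One | Aa | Ab | Ac.

Definition atom_to_ord (x : atom) : 'I_4 :=
  match x with One => inord 0 | Aa => inord 1 | Ab => inord 2 | Ac => inord 3 end.
Definition ord_to_atom (i : 'I_4) : atom :=
  match val i with 0 => One | 1 => Aa | 2 => Ab | _ => Ac end.
Lemma atom_to_ordK : cancel atom_to_ord ord_to_atom.
Proof. by case; rewrite /ord_to_atom /= inordK. Qed.

HB.instance Definition _ := Equality.copy atom (can_type atom_to_ordK).
HB.instance Definition _ := Choice.copy atom (can_type atom_to_ordK).
HB.instance Definition _ := Countable.copy atom (can_type atom_to_ordK).
HB.instance Definition _ := Finite.copy atom (can_type atom_to_ordK).

Definition RA := {set atom}.

Definition is_div (x : atom) : bool := x != One.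

(** Atom-level cycle table: [z <= x ; y].
    1' is the identity; for diversity atoms, 1' <= x;y iff y = x (converse = x,
    all atoms symmetric); a diversity cycle xyz is allowed (mandatory) iff it
    involves a, forbidden otherwise. *)
Definition atom_le_comp (x y z : atom) : bool :=
  if x == One then y == z
  else if y == One then x == z
  else if z == One then x == y
  else [|| x == Aa, y == Aa | z == Aa].

Definition ra_comp (X Y : RA) : RA :=
  [set z | [exists x in X, exists y in Y, atom_le_comp x y z]].
Definition ra_conv (X : RA) : RA := X. (* all atoms symmetric *)
Definition ra_id : RA := [set One].

(** A representation of 32_65 over a set (type) U: an embedding (injective
    homomorphism of relation algebras) into the full relation algebra on U,
    relations being represented as binary predicates on U. *)
Record representation (U : Type) (rho : RA -> U -> U -> Prop) : Prop := {
  rep_join : forall X Y u v, rho (X :|: Y) u v <-> (rho X u v \/ rho Y u v);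
  rep_compl : forall X u v, rho (~: X) u v <-> ~ rho X u v;
  rep_comp : forall X Y u v,
    rho (ra_comp X Y) u v <-> exists w, rho X u w /\ rho Y w v;
  rep_conv : forall X u v, rho (ra_conv X) u v <-> rho X v u;
  rep_id : forall u v, rho ra_id u v <-> u = v;
  rep_inj : forall X Y, (forall u v, rho X u v <-> rho Y u v) -> X = Y }.

Definition has_clique (U : Type) (E : U -> U -> Prop) (k : nat) : Prop :=
  exists f : 'I_k -> U, injective f /\ (forall i j, i != j -> E (f i) (f j)).

(* Main.v *)
Require Import Defs.
From mathcomp Require Import all_boot.
From Stdlib Require Import Classical.
Set Implicit Arguments.

Definition atom_beq (x y : atom) : bool := match x, y with
 | One, One | Aa, Aa | Ab, Ab | Ac, Ac => true | _, _ => false end.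
Lemma atom_eqE x y : (x == y) = atom_beq x y.
Proof. by case: x; case: y; rewrite ?eqxx //=; apply/negbTE/eqP. Qed.
Lemma comp1 p q z : (z \in ra_comp [set p] [set q]) = atom_le_comp p q z.
Proof. rewrite /ra_comp inE; apply/existsP/idP => [[x /andP[]]|h].
- rewrite inE => /eqP-> /existsP[y /andP[]]; by rewrite inE => /eqP->.
- exists p; rewrite inE eqxx /=; apply/existsP; exists q; by rewrite inE eqxx. Qed.

Definition bc (p : atom) := (p == Ab) || (p == Ac).

Section Rep.
Variable U : Type.
Variable rho : RA -> U -> U -> Prop.
Hypothesis H : representation rho.
Notation R p := (rho [set p]).

Lemma mono {X Y : RA} {u v} : X \subset Y -> rho X u v -> rho Y u v.
Proof. move=> s h; rewrite -(setUidPr s); apply/(rep_join H); by left. Qed.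

Lemma disj p q u v : p != q -> R p u v -> R q u v -> False.
Proof.
move=> npq hp hq; have : rho (~: [set q]) u v.
  apply: (mono _ hp); apply/subsetP => z; rewrite !inE => /eqP->; by [].
by move/(rep_compl H).
Qed.

Lemma symR p u v : R p u v -> R p v u.
Proof. move=> h; exact: (proj2 (rep_conv H [set p] v u) h). Qed.

Lemma idR u v : R One u v -> u = v.
Proof. exact: (proj1 (rep_id H u v)). Qed.

Lemma NF p q y x y' : bc p -> bc q -> R p y x -> R q x y' -> y = y' \/ R Aa y y'.
Proof.
move=> bp bq h1 h2.
have : rho (ra_comp [set p] [set q]) y y' by apply/(rep_comp H); exists x.
move/(mono (Y := [set One] :|: [set Aa])).
case/(_ _)/(rep_join H) => [|/idR|]; [|by left|by right].
apply/subsetP => z; rewrite comp1 !inE /atom_le_comp !atom_eqE.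
clear h1 h2; by move: bp bq; rewrite /bc !atom_eqE; case: p; case: q; case: z.
Qed.

Lemma mand p q u v : bc p -> bc q -> R Aa u v -> exists w, R p u w /\ R q w v.
Proof.
move=> bp bq h; apply/(rep_comp H); apply: (mono _ h).
apply/subsetP => z; rewrite comp1 !inE => /eqP->.
clear h; by move: bp bq; rewrite /bc /atom_le_comp !atom_eqE; case: p; case: q.
Qed.

Lemma neA : exists u v, R Aa u v.
Proof.
apply: NNPP => hn.
have h0 : forall u v, ~ rho set0 u v.
  move=> u v h; apply: (@disj One Aa u v);
    [by rewrite atom_eqE | by apply: (mono _ h); rewrite sub0set | by apply: (mono _ h); rewrite sub0set].
have e : [set Aa] = set0.
  apply: (rep_inj H) => u v; split => h; last by case: (h0 _ _ h).
  by case: hn; exists u, v.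
by move: (set11 Aa); rewrite e inE.
Qed.

End Rep.
Arguments disj {U rho} H {p q u v}.
Arguments NF {U rho} H {p q y x y'}.
Arguments mand {U rho} H {p q u v}.
Arguments symR {U rho} H {p u v}.

Theorem mainTheorem11 (U : Type) (rho : RA -> U -> U -> Prop) :
  representation rho -> has_clique (rho [set Aa]) 6.
Proof.
move=> H.
have bAb : bc Ab by rewrite /bc !atom_eqE.
have bAc : bc Ac by rewrite /bc !atom_eqE.
have nbc : Ab != Ac by rewrite atom_eqE.
have ncb : Ac != Ab by rewrite atom_eqE.
have nab : Aa != One by rewrite atom_eqE.
have dd : forall p q u a b, p != q -> rho [set p] u a -> rho [set q] u b -> a <> b.
  by move=> p q u a b npq h1 h2 e; subst b; apply: (disj H npq h1 h2).
have dd' : forall p q u a b, p != q -> rho [set p] a u -> rho [set q] b u -> a <> b.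
  by move=> p q u a b npq h1 h2 e; subst b; apply: (disj H npq h1 h2).
have [u [v huv]] := neA H.
have [y1 [uy1 y1v]] := mand H bAb bAb huv.
have [y2 [uy2 y2v]] := mand H bAb bAc huv.
have [z1 [uz1 z1v]] := mand H bAc bAc huv.
have [z2 [uz2 z2v]] := mand H bAc bAb huv.
have y12 : y1 <> y2 := dd' _ _ _ _ _ nbc y1v y2v.
have z12 : z1 <> z2 := dd' _ _ _ _ _ ncb z1v z2v.
have Ay : rho [set Aa] y1 y2.
  by case: (NF H bAb bAb (symR H uy1) uy2).
have [s [y1s sy2]] := mand H bAc bAc Ay.
have us : rho [set Aa] u s.
  case: (NF H bAb bAc uy1 y1s) => // e; subst s.
  by case: (disj H nbc uy1 (symR H y1s)).
have [y3 [uy3 y3s]] := mand H bAb bAb us.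
have y31 : y3 <> y1 := dd' _ _ _ _ _ nbc y3s y1s.
have y32 : y3 <> y2 := dd' _ _ _ _ _ nbc y3s (symR H sy2).
have Az : rho [set Aa] z1 z2.
  by case: (NF H bAc bAc (symR H uz1) uz2).
have [s' [z1s s'z2]] := mand H bAb bAb Az.
have us' : rho [set Aa] u s'.
  case: (NF H bAc bAb uz1 z1s) => // e; subst s'.
  by case: (disj H ncb uz1 (symR H z1s)).
have [z3 [uz3 z3s]] := mand H bAc bAc us'.
have z31 : z3 <> z1 := dd' _ _ _ _ _ ncb z3s z1s.
have z32 : z3 <> z2 := dd' _ _ _ _ _ ncb z3s (symR H s'z2).
pose f := fun i : 'I_6 => nth u [:: y1; y2; y3; z1; z2; z3] i.
pose col := fun i : 'I_6 => nth Ab [:: Ab; Ab; Ab; Ac; Ac; Ac] i.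
have colbc : forall i, bc (col i).
  by case=> [[|[|[|[|[|[|?]]]]]] ?].
have colR : forall i, rho [set col i] u (f i).
  by case=> [[|[|[|[|[|[|?]]]]]] ?].
have dist : forall i j, i != j -> f i <> f j.
  case=> [[|[|[|[|[|[|?]]]]]] ?] // [[|[|[|[|[|[|?]]]]]] ?] //= _;
  try (by apply: dd uy1 uz1 || by apply: dd uy1 uz2 || by apply: dd uy1 uz3 ||
       by apply: dd uy2 uz1 || by apply: dd uy2 uz2 || by apply: dd uy2 uz3 ||
       by apply: dd uy3 uz1 || by apply: dd uy3 uz2 || by apply: dd uy3 uz3 ||
       by apply: dd uz1 uy1 || by apply: dd uz1 uy2 || by apply: dd uz1 uy3 ||
       by apply: dd uz2 uy1 || by apply: dd uz2 uy2 || by apply: dd uz2 uy3 ||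
       by apply: dd uz3 uy1 || by apply: dd uz3 uy2 || by apply: dd uz3 uy3);
  by [|move/esym].
have edge : forall i j, i != j -> rho [set Aa] (f i) (f j).
  move=> i j nij.
  by case: (NF H (colbc i) (colbc j) (symR H (colR i)) (colR j)) => // /(dist _ _ nij).
exists f; split; last exact: edge.
move=> i j e; case: (eqVneq i j) => // nij.
have := edge _ _ nij; rewrite e => h.
by case: (disj H nab h (proj2 (rep_id H _ _) erefl)).
Qed.
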